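(* Consider a finite Markov decision process with state set $\mathcal S$, action set $\mathcal A$, transition function $P$, reward function $R$, initial state distribution $d_0$ and discount factor $\gamma\in[0,1)$, together with a finite set of options $\mathcal O$ in which every option $o$ has an intra-option policy $\pi_o(s,a,\theta)$ (a probability distribution over $a\in\mathcal A$ for each $s$), differentiable in a parameter vector $\theta$, a termination function $\beta_o(s)\in[0,1]$, and a policy over options $\pi_{\mathcal O}(s,o)$. Let $X=(S_0,O_0,A_0,S_1,O_1,A_1,\dots)$ be the random path generated by the option dynamics described in the context, and for $\mathcal T\in\mathbb N$ let $G^{\mathcal T}_\theta$ be the $\mathcal T$-step finite horizon Fisher information matrix with respect to $\theta$, i.e. the Fisher information matrix of the distribution of the path truncated to terminate at time step $\mathcal T$: $$\big(G^{\mathcal T}_\theta\big)_{i,j}=\mathbb E\Big[\frac{\partial \ln \Pr(X_{0:\mathcal T};\theta)}{\partial\theta_i}\frac{\partial \ln \Pr(X_{0:\mathcal T};\theta)}{\partial\theta_j}\Big] .$$ Let $\mu_{\mathcal O}(s,o)$ denote the stationary distribution of state-option pairs $(s,o)$ of this process. Then $$\lim_{\mathcal T\to\infty}\frac{1}{\mathcal T}G^{\mathcal T}_\theta=\langle G_\theta\rangle_{\mu_{\mathcal O}(s,o)},\qquad\text{where}\qquad \big(\langle G_\theta\rangle_{\mu_{\mathcal O}(s,o)}\big)_{i,j}=\sum_{s,o}\mu_{\mathcal O}(s,o)\sum_{a}\pi_o(s,a,\theta)\,\frac{\partial\ln\pi_o(s,a,\theta)}{\partial\theta_i}\frac{\partial\ln\pi_o(s,a,\theta)}{\partial\theta_j},$$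 i.e. the limit equals the Fisher information matrix of the intra-option policies under the stationary distribution $\pi_o(s,a,\theta)\mu_{\mathcal O}(s,o)$ of states, options and actions.
   Context: Option dynamics (option-critic framework, all options available in every state): at time $t$ the agent is in state $S_t$ with active option $O_t$; it draws $A_t\sim\pi_{O_t}(S_t,\cdot,\theta)$, receives a reward $R_t$ with $\mathbb E[R_t\mid S_t=s,A_t=a]=R(s,a)$, and the environment moves to $S_{t+1}\sim P(S_t,A_t,\cdot)$. The next option is then drawn with probability $\Pr(O_{t+1}=o'\mid O_t=o,S_{t+1}=s')=(1-\beta_o(s'))\mathbf 1_{o'=o}+\beta_o(s')\pi_{\mathcal O}(s',o')$. The initial pair $(S_0,O_0)=(s_0,o_0)$ is given. The discounted problem is treated as an undiscounted one in which the process terminates with probability $1-\gamma$ at each step. The process of state-option pairs is assumed ergodic and irreducible, so that $\mu_{\mathcal O}(s,o)$ is a well-defined stationary distribution. *)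

(* Defs.v *)
From HB Require Import structures.
From mathcomp Require Import all_boot all_order all_algebra.
From mathcomp Require Import all_classical all_reals all_analysis.
Set Implicit Arguments. Unset Strict Implicit. Unset Printing Implicit Defensive.
Import Order.TTheory GRing.Theory Num.Theory.
Import numFieldNormedType.Exports.
Local Open Scope ring_scope.

Section OptionDynamics.
Variables (R : realType) (n : nat) (S A O : finType).
Variable pi : O -> S -> A -> 'rV[R]_n -> R.
Variable P : S -> A -> S -> R.
Variable beta : O -> S -> R.
Variable piO : S -> O -> R.

(* Pr(O_{t+1} = o' | O_t = o, S_{t+1} = s') *)
Definition opt_trans (o : O) (s' : S) (o' : O) : R :=
  (1 - beta o s') * (o' == o)%:R + beta o s' * piO s' o'.

Definition so_kernel (theta : 'rV[R]_n) (x y : S * O) : R :=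
  \sum_(a : A) pi x.2 x.1 a theta * P x.1 a y.1 * opt_trans x.2 y.1 y.2.

Fixpoint kpow (T : finType) (K : T -> T -> R) (m : nat) (x y : T) : R :=
  match m with
  | 0 => (x == y)%:R
  | m'.+1 => \sum_(z : T) kpow K m' x z * K z y
  end.

Definition irreducible_chain (T : finType) (K : T -> T -> R) : Prop :=
  forall x y : T, exists m : nat, 0 < kpow K m x y.

Definition aperiodic_chain (T : finType) (K : T -> T -> R) : Prop :=
  forall x : T, forall d : nat,
    (forall m : nat, (0 < m)%N -> 0 < kpow K m x x -> (d %| m)%N) -> d = 1%N.

Definition ergodic_chain (T : finType) (K : T -> T -> R) : Prop :=
  irreducible_chain K /\ aperiodic_chain K.

Definition stationary_so (theta : 'rV[R]_n) (mu : S -> O -> R) : Prop :=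
  (forall s o, 0 <= mu s o) /\ (\sum_(s : S) \sum_(o : O) mu s o = 1) /\
  (forall s' o', \sum_(s : S) \sum_(o : O) mu s o * so_kernel theta (s, o) (s', o')
                 = mu s' o').

(* probability of a path segment (s_t,o_t,a_t),(s_{t+1},...),... given
   (S_t,O_t) = (s_t,o_t) *)
Fixpoint path_prob_from (theta : 'rV[R]_n) (x : S * O * A) (xs : seq (S * O * A))
  : R :=
  let: (s, o, a) := x in
  match xs with
  | [::] => pi o s a theta
  | y :: ys =>
      pi o s a theta * P s a y.1.1 * opt_trans o y.1.1 y.1.2
      * path_prob_from theta y ys
  end.

(* Pr(X_{0:T} = xs ; theta), with (S_0,O_0) = (s0,o0) given *)
Definition path_prob (s0 : S) (o0 : O) (theta : 'rV[R]_n) (xs : seq (S * O * A))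
  : R :=
  match xs with
  | [::] => 1
  | x :: xs' => ((x.1.1 == s0) && (x.1.2 == o0))%:R * path_prob_from theta x xs'
  end.

Definition coord_dir (i : 'I_n) : 'rV[R]_n := delta_mx 0 i.

Definition pderiv (f : 'rV[R]_n -> R) (theta : 'rV[R]_n) (i : 'I_n) : R :=
  derive f theta (coord_dir i).

(* T-step finite horizon Fisher information matrix: the path X_{0:T}
   consists of the T triples (S_t, O_t, A_t), t = 0 .. T-1 *)
Definition fisher_T (s0 : S) (o0 : O) (theta : 'rV[R]_n) (T : nat) (i j : 'I_n) : R :=
  \sum_(xs : T.-tuple (S * O * A))
    path_prob s0 o0 theta xs
    * pderiv (fun th => ln (path_prob s0 o0 th xs)) theta i
    * pderiv (fun th => ln (path_prob s0 o0 th xs)) theta j.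

Definition fisher_avg (mu : S -> O -> R) (theta : 'rV[R]_n) (i j : 'I_n) : R :=
  \sum_(s : S) \sum_(o : O) mu s o *
    \sum_(a : A) pi o s a theta
      * pderiv (fun th => ln (pi o s a th)) theta i
      * pderiv (fun th => ln (pi o s a th)) theta j.

End OptionDynamics.

(* Main.v *)
Require Import Defs.
From HB Require Import structures.
From mathcomp Require Import all_boot all_order all_algebra.
From mathcomp Require Import all_classical all_reals all_analysis.
From mathcomp Require Import ring lra.
Import Order.TTheory GRing.Theory Num.Theory.
Import numFieldNormedType.Exports.
Local Open Scope ring_scope.

Section Der.
Variables (R : realType) (V : normedModType R).

Lemma Dv_1D (f : V -> R) x v : 'D_v f x = 'D_1 (fun h : R => f (h *: v + x)) 0.
Proof.
rewrite /derive; congr lim; apply: f_equal2 => //; apply/funext => h /=.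
by rewrite scale0r add0r addr0 [_%:A]mulr1.
Qed.

Lemma ln_chain (f : V -> R) x v : derivable f x v -> 0 < f x ->
  'D_v (fun t => ln (f t)) x = 'D_v f x / f x.
Proof.
move=> df fx0; rewrite !Dv_1D.
set g := fun h : R => f (h *: v + x).
have dg : derivable g 0 1 by exact: ((derivable1P f x v).1 df).
have g0 : g 0 = f x by rewrite /g scale0r add0r.
have dln : derivable (@ln R) (g 0) 1.
  by rewrite g0; have := is_derive1_ln fx0; case.
rewrite -!derive1E.
have -> : (fun h : R => ln (f (h *: v + x))) = (@ln R) \o g by [].
rewrite derive1_comp // g0 derive1E.
rewrite (@derive_val _ _ _ _ _ _ _ (is_derive1_ln fx0)).
by rewrite mulrC.
Qed.

Lemma fermat0 (f : V -> R) x v : (forall t, differentiable f t) ->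
  (forall t, 0 <= f t) -> f x = 0 -> 'D_v f x = 0.
Proof.
move=> df f0 fx; rewrite Dv_1D.
set g := fun h : R => f (h *: v + x).
have : is_derive (0:R) 1 g 0.
  apply: (@derive1_at_min _ g (-1) 1 0).
  - lra.
  - move=> t _; apply/derivable1_diffP.
    by apply: differentiable_comp.
  - rewrite in_itv /=; apply/andP; split; lra.
  - by move=> t _; rewrite /g scale0r add0r fx.
by move=> H; rewrite (@derive_val _ _ _ _ _ _ _ H).
Qed.

End Der.

Set Implicit Arguments. Unset Strict Implicit.

Section Chain.
Variables (R : realType) (X : finType) (K : X -> X -> R).
Hypotheses (K_ge0 : forall x y, 0 <= K x y) (K_sum1 : forall x, \sum_y K x y = 1).

Lemma sum_delta (x : X) (f : X -> R) : \sum_y (x == y)%:R * f y = f x.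
Proof.
rewrite (bigD1 x) //= eqxx mul1r big1 ?addr0 // => y.
by rewrite eq_sym => /negbTE ->; rewrite mul0r.
Qed.

Lemma kpow_ge0 m x y : 0 <= kpow K m x y.
Proof.
elim: m y => [|m IH] y /=; first exact: ler0n.
by apply: sumr_ge0 => z _; apply: mulr_ge0.
Qed.

Lemma kpow_sum1 m x : \sum_y kpow K m x y = 1.
Proof.
elim: m => [|m IH] /=.
  rewrite (bigD1 x) //= eqxx big1 ?addr0 // => y.
  by rewrite eq_sym => /negbTE ->.
rewrite exchange_big /= -[RHS]IH; apply: eq_bigr => z _.
by rewrite -big_distrr /= K_sum1 mulr1.
Qed.

Lemma kpowS m x y : kpow K m.+1 x y = \sum_z kpow K m x z * K z y.
Proof. by []. Qed.

Lemma kpowSl m x y : kpow K m.+1 x y = \sum_z K x z * kpow K m z y.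
Proof.
elim: m y => [|m IH] y.
  rewrite /= sum_delta.
  under eq_bigr do rewrite mulrC eq_sym; by rewrite sum_delta.
rewrite kpowS.
under eq_bigr do rewrite IH big_distrl /=.
rewrite exchange_big /=; apply: eq_bigr => z _.
by rewrite /= big_distrr /=; apply: eq_bigr => w _; rewrite mulrA.
Qed.

Definition Pt m (f : X -> R) x := \sum_y kpow K m x y * f y.
Definition KA (f : X -> R) x := \sum_y K x y * f y.

Lemma Pt0 f x : Pt 0 f x = f x.
Proof. exact: sum_delta. Qed.

Lemma Pt_S m f x : Pt m.+1 f x = Pt m (KA f) x.
Proof.
rewrite /Pt /KA /=.
under eq_bigr do rewrite big_distrl /=.
rewrite exchange_big /=; apply: eq_bigr => z _.
by rewrite big_distrr /=; apply: eq_bigr => w _; rewrite mulrA.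
Qed.

Lemma Pt_Sl m f x : Pt m.+1 f x = KA (Pt m f) x.
Proof.
rewrite /Pt /KA.
under eq_bigr do rewrite kpowSl big_distrl /=.
rewrite exchange_big /=; apply: eq_bigr => z _.
by rewrite big_distrr /=; apply: eq_bigr => w _; rewrite mulrA.
Qed.

Lemma Pt_cst m c x : Pt m (fun _ => c) x = c.
Proof. by rewrite /Pt -big_distrl /= kpow_sum1 mul1r. Qed.

Lemma PtB m f g x : Pt m (fun y => f y - g y) x = Pt m f x - Pt m g x.
Proof.
by rewrite /Pt -sumrB; apply: eq_bigr => y _; rewrite mulrBr.
Qed.

Lemma Pt_bound m f B x : (forall y, `|f y| <= B) -> `|Pt m f x| <= B.
Proof.
move=> hB; rewrite /Pt; apply: le_trans (ler_norm_sum _ _ _) _.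
rewrite -[leRHS]mul1r -(kpow_sum1 m x) big_distrl /=.
apply: ler_sum => y _; rewrite normrM ger0_norm ?kpow_ge0 //.
by apply: ler_wpM2l; [exact: kpow_ge0|exact: hB].
Qed.

Lemma Pt_tele m f x :
  Pt m f x - f x = \sum_(k < m) Pt k (fun y => KA f y - f y) x.
Proof.
elim: m => [|m IH]; first by rewrite Pt0 subrr big_ord0.
rewrite big_ord_recr /= -IH PtB -Pt_S.
by rewrite addrC addrA subrK.
Qed.

Variable mu : X -> R.
Hypotheses (mu_ge0 : forall x, 0 <= mu x) (mu_sum1 : \sum_x mu x = 1)
  (mu_stat : forall y, \sum_x mu x * K x y = mu y).

Lemma mu_Pt m f : \sum_x mu x * Pt m f x = \sum_x mu x * f x.
Proof.
elim: m f => [|m IH] f; first by apply: eq_bigr => x _; rewrite Pt0.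
under eq_bigr do rewrite Pt_Sl.
rewrite -IH /KA /Pt.
under eq_bigr do rewrite big_distrr /=.
rewrite exchange_big /=; apply: eq_bigr => y _.
rewrite -mu_stat big_distrl /=; apply: eq_bigr => z _.
by rewrite !mulrA.
Qed.

Hypothesis irr : forall x y, exists m, 0 < kpow K m x y.

Lemma irr_const : exists C, forall x y, exists m,
  0 < kpow K m x y /\ m%:R <= C * kpow K m x y.
Proof.
have [mf hmf] : exists mf : X -> X -> nat, forall x y, 0 < kpow K (mf x y) x y.
  exists (fun x y => ex_minn (irr x y)) => x y.
  by case: ex_minnP.
exists (\sum_x \sum_y (mf x y)%:R / kpow K (mf x y) x y) => x y.
exists (mf x y); split; first exact: hmf.
have hp := hmf x y.
rewrite -ler_pdivrMr //.
rewrite (bigD1 x) //= (bigD1 y) //= -addrA lerDl.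
apply: addr_ge0; first by apply: sumr_ge0 => z _; apply: divr_ge0 => //; exact: kpow_ge0.
by apply: sumr_ge0 => w _; apply: sumr_ge0 => z _; apply: divr_ge0 => //; exact: kpow_ge0.
Qed.

Lemma osc_bound C g eps :
  (forall x y, exists m, 0 < kpow K m x y /\ m%:R <= C * kpow K m x y) ->
  \sum_x mu x * g x = 0 -> (forall x, `|KA g x - g x| <= eps) ->
  forall z, `|g z| <= C * eps.
Proof.
move=> HC hmu heps z.
have eps0 : 0 <= eps by apply: le_trans (heps z); exact: normr_ge0.
have [xM _ HM] := @arg_maxP _ R X z xpredT g isT.
have [xm _ Hm] := @arg_minP _ R X z xpredT g isT.
have HM' : forall y, g y <= g xM by move=> y; exact: HM.
have Hm' : forall y, g xm <= g y by move=> y; exact: Hm.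
have gM0 : 0 <= g xM.
  have : 0 <= \sum_x mu x * (g xM - g x).
    by apply: sumr_ge0 => x _; rewrite mulr_ge0 // subr_ge0.
  by rewrite (eq_bigr _ (fun x _ => mulrBr _ _ _)) sumrB hmu subr0 -big_distrl /= mu_sum1 mul1r.
have gm0 : g xm <= 0.
  have : 0 <= \sum_x mu x * (g x - g xm).
    by apply: sumr_ge0 => x _; rewrite mulr_ge0 // subr_ge0.
  by rewrite (eq_bigr _ (fun x _ => mulrBr _ _ _)) sumrB hmu sub0r -big_distrl /= mu_sum1 mul1r oppr_ge0.
have [m [hp hmC]] := HC xM xm.
have h1 : g xM - Pt m g xM <= m%:R * eps.
  rewrite -opprB Pt_tele -sumrN.
  have -> : m%:R * eps = \sum_(k < m) eps by rewrite sumr_const card_ord mulr_natl.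
  apply: ler_sum => k _.
  apply: le_trans (ler_norm _) _; rewrite normrN.
  exact: Pt_bound.
have h2 : kpow K m xM xm * (g xM - g xm) <= g xM - Pt m g xM.
  rewrite /Pt -[X in _ <= X - _]mul1r -(kpow_sum1 m xM) big_distrl /= -sumrB.
  rewrite (bigD1 xm) //= -mulrBr lerDl.
  by apply: sumr_ge0 => y _; rewrite -mulrBr mulr_ge0 ?kpow_ge0 // subr_ge0.
have h3 : g xM - g xm <= C * eps.
  rewrite -(@ler_pM2l _ (kpow K m xM xm)) //.
  apply: le_trans h2 _; apply: le_trans h1 _.
  by rewrite mulrA [_ * C]mulrC; apply: ler_wpM2r.
rewrite ler_norml; apply/andP; split.
  rewrite lerNl; apply: le_trans h3.
  have := Hm' z; lra.
apply: le_trans h3; rewrite -[g z]subr0; apply: lerB => //.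
Qed.

End Chain.

Section Paths.
Variables (R : realType) (n : nat) (S A O : finType)
  (pi : O -> S -> A -> 'rV[R]_n -> R) (P : S -> A -> S -> R)
  (beta : O -> S -> R) (piO : S -> O -> R).
Hypotheses (hpi_ge0 : forall o s a th, 0 <= pi o s a th)
  (hpi_sum1 : forall o s th, \sum_(a : A) pi o s a th = 1)
  (hpi_diff : forall o s a th, differentiable (pi o s a) th)
  (hP_ge0 : forall s a s', 0 <= P s a s')
  (hP_sum1 : forall s a, \sum_(s' : S) P s a s' = 1)
  (hbeta : forall o s, 0 <= beta o s <= 1)
  (hpiO_ge0 : forall s o, 0 <= piO s o)
  (hpiO_sum1 : forall s, \sum_(o : O) piO s o = 1).
Variables (theta : 'rV[R]_n).

Definition dl (v : 'rV[R]_n) o s a := 'D_v (fun th => ln (pi o s a th)) theta.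
Definition sc v (l : seq (S * O * A)) := \sum_(x <- l) dl v x.1.2 x.1.1 x.2.
Local Notation ppf := (path_prob_from pi P beta piO).
Local Notation opt := (opt_trans beta piO).

Lemma pi_dl v o s a : pi o s a theta * dl v o s a = 'D_v (pi o s a) theta.
Proof.
have := hpi_ge0 o s a theta; rewrite le_eqVlt => /orP [/eqP h0 | hpos].
  by rewrite -h0 mul0r fermat0 // h0.
rewrite /dl ln_chain //; last exact: diff_derivable.
by rewrite mulrC divfK // gt_eqF.
Qed.

Lemma opt_ge0 o s' o' : 0 <= opt o s' o'.
Proof.
have /andP [b0 b1] := hbeta o s'.
rewrite /opt_trans; apply: addr_ge0; apply: mulr_ge0 => //.
  by rewrite subr_ge0.
Qed.

Lemma opt_sum1 o s' : \sum_o' opt o s' o' = 1.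
Proof.
rewrite /opt_trans big_split /= -big_distrr -big_distrr /= hpiO_sum1.
rewrite (bigD1 o) //= eqxx big1 ?addr0; first by rewrite mulr1 mulr1 subrK.
by move=> o' /negbTE ->.
Qed.

Lemma ppf_ge0 th ys x : 0 <= ppf th x ys.
Proof.
elim: ys x => [|y ys IH] [[s o] a] /=; first exact: hpi_ge0.
case: y => [[s' o'] a'] /=.
by rewrite !mulr_ge0 ?opt_ge0.
Qed.

Lemma ppf_deriv v ys x : derivable (fun th => ppf th x ys) theta v /\
  'D_v (fun th => ppf th x ys) theta = ppf theta x ys * sc v (x :: ys).
Proof.
elim: ys x => [|y ys IH] [[s o] a].
  split; first by rewrite /=; apply: diff_derivable; exact: hpi_diff.
  by rewrite /sc big_cons big_nil addr0 /= pi_dl.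
case: y => [[s' o'] a'].
have [dQ DQ] := IH (s', o', a').
set c := P s a s' * opt o s' o'.
have -> : (fun th => ppf th (s, o, a) ((s', o', a') :: ys)) =
  c \*o (pi o s a * (fun th => ppf th (s', o', a') ys)).
  by apply/funext => th /=; rewrite /c mulrfctE; ring.
have dpi : derivable (pi o s a) theta v by apply: diff_derivable; exact: hpi_diff.
have dM : derivable (pi o s a * (fun th => ppf th (s', o', a') ys)) theta v.
  exact: derivableM.
split.
  have -> : c \*o (pi o s a * (fun th => ppf th (s', o', a') ys)) =
    (fun=> c) * (pi o s a * (fun th => ppf th (s', o', a') ys)) by [].
  exact: (derivableM (derivable_cst c theta v) dM).
rewrite (deriveMl c dM) /= (deriveM dpi dQ) DQ -(pi_dl v) /sc !big_cons /=.
rewrite /c /GRing.scale /=; ring.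
Qed.


Lemma sum_tupleS (T : finType) m (F : seq T -> R) :
  \sum_(t : m.+1.-tuple T) F t = \sum_(x : T) \sum_(t : m.-tuple T) F (x :: t).
Proof.
rewrite [RHS]pair_big /=.
rewrite (reindex (fun p : T * m.-tuple T => [tuple of p.1 :: p.2])) /=.
  by apply: eq_bigr.
exists (fun t => (thead t, behead_tuple t)).
  by move=> [x t] _ /=; rewrite theadE; congr pair; apply: val_inj.
by move=> t _; rewrite /= -tuple_eta.
Qed.

Lemma sum_tuple0 (T : finType) (F : seq T -> R) :
  \sum_(t : 0.-tuple T) F t = F [::].
Proof. by rewrite (big_pred1 [tuple]) // => t; apply/esym/eqP/tuple0. Qed.

Lemma sum_pair (I J : finType) (F : I * J -> R) :
  \sum_p F p = \sum_i \sum_j F (i, j).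
Proof. by rewrite pair_big; apply: eq_bigr => -[]. Qed.

Definition E m s o (g : seq (S * O * A) -> R) :=
  \sum_(a : A) \sum_(ys : m.-tuple (S * O * A)) ppf theta (s, o, a) ys * g ((s, o, a) :: ys).

Lemma E_rec m s o g : E m.+1 s o g = \sum_a pi o s a theta *
  \sum_s' \sum_o' P s a s' * opt o s' o' * E m s' o' (fun l => g ((s, o, a) :: l)).
Proof.
rewrite /E; apply: eq_bigr => a _.
rewrite (@sum_tupleS _ _ (fun l => ppf theta (s, o, a) l * g ((s, o, a) :: l))) sum_pair.
rewrite sum_pair big_distrr; apply: eq_bigr => s' _.
rewrite big_distrr; apply: eq_bigr => o' _.
rewrite !big_distrr; apply: eq_bigr => a' _.
rewrite !big_distrr; apply: eq_bigr => ys _ /=.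
ring.
Qed.

Lemma E_add m s o f1 f2 : E m s o (fun l => f1 l + f2 l) = E m s o f1 + E m s o f2.
Proof.
rewrite /E -big_split; apply: eq_bigr => a _ /=.
by rewrite -big_split; apply: eq_bigr => ys _ /=; rewrite mulrDr.
Qed.

Lemma E_scale m s o c f : E m s o (fun l => c * f l) = c * E m s o f.
Proof.
rewrite /E big_distrr; apply: eq_bigr => a _ /=.
by rewrite big_distrr; apply: eq_bigr => ys _ /=; rewrite mulrCA.
Qed.

Lemma PO_sum1 s a o : \sum_s' \sum_o' P s a s' * opt o s' o' = 1.
Proof.
rewrite -(hP_sum1 s a); apply: eq_bigr => s' _.
by rewrite -big_distrr /= opt_sum1 mulr1.
Qed.

Lemma E_1 m s o : E m s o (fun _ => 1) = 1.
Proof.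
elim: m s o => [|m IH] s o.
  rewrite /E -[RHS](hpi_sum1 o s theta); apply: eq_bigr => a _.
  by rewrite (@sum_tuple0 _ (fun l => ppf theta (s, o, a) l * 1)) mulr1.
rewrite E_rec -[RHS](hpi_sum1 o s theta); apply: eq_bigr => a _.
rewrite -[RHS]mulr1 -[X in _ = _ * X](PO_sum1 s a o); congr (_ * _).
by apply: eq_bigr => s2 _; apply: eq_bigr => o2 _; rewrite /= IH mulr1.
Qed.

Lemma E_cst m s o c : E m s o (fun _ => c) = c.
Proof.
have -> : (fun _ : seq (S * O * A) => c) = (fun l => c * 1) by apply/funext => l; rewrite mulr1.
by rewrite E_scale E_1 mulr1.
Qed.

Lemma derive_sumseq (I : Type) (r : seq I) (f : I -> 'rV[R]_n -> R) v :
  (forall i, derivable (f i) theta v) ->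
  derivable (fun th => \sum_(i <- r) f i th) theta v /\
  'D_v (fun th => \sum_(i <- r) f i th) theta = \sum_(i <- r) 'D_v (f i) theta.
Proof.
move=> df; elim: r => [|i r [dr Dr]].
  have -> : (fun th : 'rV[R]_n => \sum_(i <- [::]) f i th) = cst 0.
    by apply/funext => th; rewrite big_nil.
  by rewrite big_nil derive_cst; split => //; exact: derivable_cst.
have -> : (fun th => \sum_(j <- i :: r) f j th) = f i + (fun th => \sum_(j <- r) f j th).
  by apply/funext => th; rewrite big_cons.
split; first exact: derivableD.
by rewrite deriveD // Dr big_cons.
Qed.

Lemma sum_pi_dl v o s : \sum_a pi o s a theta * dl v o s a = 0.
Proof.
under eq_bigr do rewrite pi_dl.
have dpi : forall a, derivable (pi o s a) theta v.
  by move=> a; apply: diff_derivable; exact: hpi_diff.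
have [_ D] := @derive_sumseq _ (enum A) (fun a => pi o s a) v dpi.
have -> : \sum_a 'D_v (pi o s a) theta = \sum_(a <- enum A) 'D_v (pi o s a) theta.
  by rewrite big_enum.
rewrite -D.
have -> : (fun th => \sum_(a <- enum A) pi o s a th) = cst 1.
  by apply/funext => th; rewrite big_enum /= hpi_sum1.
exact: derive_cst.
Qed.

Lemma E_sc v m s o : E m s o (sc v) = 0.
Proof.
elim: m s o => [|m IH] s o.
  rewrite /E -[RHS](sum_pi_dl v o s); apply: eq_bigr => a _.
  by rewrite (@sum_tuple0 _ (fun l => ppf theta (s, o, a) l * sc v ((s, o, a) :: l))) /sc big_cons big_nil addr0.
rewrite E_rec -[RHS](sum_pi_dl v o s); apply: eq_bigr => a _.
congr (_ * _); rewrite -[RHS]mulr1 -[X in _ = _ * X](PO_sum1 s a o) big_distrr.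
apply: eq_bigr => s' _; rewrite big_distrr; apply: eq_bigr => o' _ /=.
have -> : (fun l => sc v ((s, o, a) :: l)) = (fun l => dl v o s a * 1 + sc v l).
  by apply/funext => l; rewrite /sc big_cons mulr1.
by rewrite E_add E_scale E_1 IH addr0 mulr1 mulrC.
Qed.


Local Notation K := (so_kernel pi P beta piO theta).

Definition Fso vi vj (x : S * O) :=
  \sum_a pi x.2 x.1 a theta * dl vi x.2 x.1 a * dl vj x.2 x.1 a.

Lemma E_V vi vj m s o : E m s o (fun l => sc vi l * sc vj l) =
  \sum_(t < m.+1) Pt K t (Fso vi vj) (s, o).
Proof.
elim: m s o => [|m IH] s o.
  rewrite big_ord1 Pt0 /E /Fso; apply: eq_bigr => a _.
  rewrite (@sum_tuple0 _ (fun l => ppf theta (s, o, a) l * (sc vi ((s, o, a) :: l) * sc vj ((s, o, a) :: l)))).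
  by rewrite /sc !big_cons !big_nil !addr0 /=; ring.
set V := fun y : S * O => \sum_(t < m.+1) Pt K t (Fso vi vj) y.
have step : forall a s' o', E m s' o' (fun l => sc vi ((s, o, a) :: l) * sc vj ((s, o, a) :: l))
   = dl vi o s a * dl vj o s a + V (s', o').
  move=> a s' o'.
  have -> : (fun l => sc vi ((s, o, a) :: l) * sc vj ((s, o, a) :: l)) =
    (fun l => (dl vi o s a * dl vj o s a) * 1 + (dl vi o s a * sc vj l +
       (dl vj o s a * sc vi l + sc vi l * sc vj l))).
    by apply/funext => l; rewrite /sc !big_cons /=; ring.
  by rewrite !E_add !E_scale E_1 !E_sc IH /V; ring.
rewrite E_rec.
transitivity (\sum_a pi o s a theta * \sum_s' \sum_o' P s a s' * opt o s' o' *
   (dl vi o s a * dl vj o s a + V (s', o'))).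
  apply: eq_bigr => a _; congr (_ * _); apply: eq_bigr => s' _.
  by apply: eq_bigr => o' _; rewrite step.
rewrite big_ord_recl Pt0.
rewrite [X in _ = _ + X](_ : _ = \sum_s' \sum_o' K (s, o) (s', o') * V (s', o')); last first.
  under eq_bigr => i _ do rewrite lift0 Pt_Sl.
  rewrite /KA exchange_big /= sum_pair; apply: eq_bigr => s' _; apply: eq_bigr => o' _.
  by rewrite /V big_distrr.
transitivity (\sum_a (pi o s a theta * dl vi o s a * dl vj o s a +
   \sum_s' \sum_o' pi o s a theta * P s a s' * opt o s' o' * V (s', o'))).
  apply: eq_bigr => a _.
  rewrite -[X in _ = X + _]mulr1 -(PO_sum1 s a o) !big_distrr -big_split /=.
  apply: eq_bigr => s' _; rewrite !big_distrr -big_split /=.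
  by apply: eq_bigr => o' _; ring.
rewrite big_split /=; congr (_ + _).
rewrite exchange_big /=; apply: eq_bigr => s' _.
rewrite exchange_big /=; apply: eq_bigr => o' _.
by rewrite /so_kernel /= big_distrl.
Qed.


Lemma dln_ppf v x ys : 0 < ppf theta x ys ->
  'D_v (fun th => ln (ppf th x ys)) theta = sc v (x :: ys).
Proof.
move=> hp; have [d D] := ppf_deriv v ys x.
rewrite ln_chain // D mulrC mulKf //; exact: lt0r_neq0.
Qed.

Lemma fisher_eq s0 o0 T i j :
  fisher_T pi P beta piO s0 o0 theta T.+1 i j =
  E T s0 o0 (fun l => sc (coord_dir R i) l * sc (coord_dir R j) l).
Proof.
rewrite /fisher_T.
rewrite (@sum_tupleS _ _ (fun l => path_prob pi P beta piO s0 o0 theta l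
    * pderiv (fun th => ln (path_prob pi P beta piO s0 o0 th l)) theta i
    * pderiv (fun th => ln (path_prob pi P beta piO s0 o0 th l)) theta j)).
rewrite sum_pair sum_pair (bigD1 s0) //= [X in _ + X]big1 ?addr0; last first.
  move=> s /negbTE hs; apply: big1 => o _; apply: big1 => a _; apply: big1 => ys _.
  by rewrite /path_prob /= hs /= mul0r !mul0r.
rewrite (bigD1 o0) //= [X in _ + X]big1 ?addr0; last first.
  move=> o /negbTE ho; apply: big1 => a _; apply: big1 => ys _.
  by rewrite /path_prob /= ho andbF /= mul0r !mul0r.
rewrite /E; apply: eq_bigr => a _; apply: eq_bigr => ys _.
have -> : (fun th => ln (path_prob pi P beta piO s0 o0 th ((s0, o0, a) :: ys))) =
  (fun th => ln (ppf th (s0, o0, a) ys)).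
  by apply/funext => th; rewrite /path_prob /= !eqxx mul1r.
rewrite /path_prob /= !eqxx mul1r /pderiv.
have := ppf_ge0 theta ys (s0, o0, a); rewrite le_eqVlt => /orP [/eqP <- | hp].
  by rewrite !mul0r.
by rewrite !dln_ppf // mulrA.
Qed.

End Paths.

Local Open Scope classical_set_scope.
Local Open Scope ring_scope.

Theorem theorem1 (R : realType) (n : nat) (S A O : finType)
  (pi : O -> S -> A -> 'rV[R]_n -> R) (P : S -> A -> S -> R)
  (beta : O -> S -> R) (piO : S -> O -> R)
  (s0 : S) (o0 : O) (theta : 'rV[R]_n) (mu : S -> O -> R)
  (hpi_ge0 : forall o s a th, 0 <= pi o s a th)
  (hpi_sum1 : forall o s th, \sum_(a : A) pi o s a th = 1)
  (hpi_diff : forall o s a th, differentiable (pi o s a) th)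
  (hP_ge0 : forall s a s', 0 <= P s a s')
  (hP_sum1 : forall s a, \sum_(s' : S) P s a s' = 1)
  (hbeta : forall o s, 0 <= beta o s <= 1)
  (hpiO_ge0 : forall s o, 0 <= piO s o)
  (hpiO_sum1 : forall s, \sum_(o : O) piO s o = 1)
  (herg : ergodic_chain (so_kernel pi P beta piO theta))
  (hmu : stationary_so pi P beta piO theta mu) :
  forall i j : 'I_n,
    (fun T : nat => (T%:R)^-1 * fisher_T pi P beta piO s0 o0 theta T i j)
      @ \oo --> fisher_avg pi mu theta i j.
Proof.
move=> i j.
set K := so_kernel pi P beta piO theta.
have K_ge0 : forall x y, 0 <= K x y.
  move=> [s o] [s' o']; rewrite /K /so_kernel /=.
  apply: sumr_ge0 => a _; rewrite !mulr_ge0 //; exact: opt_ge0.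
have K_sum1 : forall x, \sum_y K x y = 1.
  move=> [s o]; rewrite sum_pair /K /so_kernel /=.
  under eq_bigr do rewrite exchange_big /=.
  rewrite exchange_big /= -[RHS](hpi_sum1 o s theta); apply: eq_bigr => a _.
  rewrite -[RHS]mulr1 -[X in _ = _ * X](PO_sum1 beta hP_sum1 hpiO_sum1 s a o) big_distrr.
  apply: eq_bigr => s' _; rewrite big_distrr; apply: eq_bigr => o' _.
  by rewrite /= mulrA.
pose mu' : S * O -> R := fun x => mu x.1 x.2.
case: hmu => [mu_ge0 [mu_sum1 mu_stat]].
have mu'_ge0 : forall x, 0 <= mu' x by move=> [s o]; exact: mu_ge0.
have mu'_sum1 : \sum_x mu' x = 1 by rewrite sum_pair.
have mu'_stat : forall y, \sum_x mu' x * K x y = mu' y.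
  by move=> [s' o']; rewrite sum_pair; exact: mu_stat.
have irr : forall x y, exists m, 0 < kpow K m x y by case: herg.
have [C HC] := irr_const K_ge0 irr.
pose vi := coord_dir R i; pose vj := coord_dir R j.
pose F := Fso pi theta vi vj.
pose c := fisher_avg pi mu theta i j.
have hc : c = \sum_x mu' x * F x by rewrite /c /fisher_avg sum_pair.
pose f := fun x => F x - c.
have hf : \sum_x mu' x * f x = 0.
  rewrite /f; under eq_bigr do rewrite mulrBr.
  by rewrite sumrB -hc -big_distrl /= mu'_sum1 mul1r subrr.
pose G := fun T x => \sum_(t < T) Pt K t f x.
have hG1 : forall T, \sum_x mu' x * G T x = 0.
  move=> T; rewrite /G; under eq_bigr do rewrite big_distrr.
  rewrite exchange_big /= big1 // => t _.
  by rewrite (mu_Pt mu'_stat).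
have hG2 : forall T x, KA K (G T) x - G T x = Pt K T f x - f x.
  elim=> [|T IH] x.
    rewrite /G big_ord0 Pt0 subrr /KA big1 ?subr0 // => y _.
    by rewrite big_ord0 mulr0.
  have -> : KA K (G T.+1) x = KA K (G T) x + Pt K T.+1 f x.
    rewrite Pt_Sl /KA -big_split /=; apply: eq_bigr => y _.
    by rewrite /G big_ord_recr /= mulrDr.
  have -> : G T.+1 x = G T x + Pt K T f x by rewrite /G big_ord_recr.
  have := IH x; lra.
pose B := \sum_x `|f x|.
have hB : forall y, `|f y| <= B.
  move=> y; rewrite /B (bigD1 y) //= lerDl.
  by apply: sumr_ge0 => z _; exact: normr_ge0.
have hGb : forall T x, `|G T x| <= C * (B + B).
  move=> T x; apply: (osc_bound K_ge0 K_sum1 mu'_ge0 mu'_sum1 HC (hG1 T)) => y.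
  rewrite hG2; apply: le_trans (ler_normB _ _) _.
  by apply: lerD => //; exact: Pt_bound.
have hfis : forall T, fisher_T pi P beta piO s0 o0 theta T.+1 i j
    = G T.+1 (s0, o0) + T.+1%:R * c.
  move=> T; rewrite (fisher_eq hpi_ge0 hpi_diff hP_ge0 hbeta hpiO_ge0).
  rewrite (E_V beta hpi_ge0 hpi_sum1 hpi_diff hP_sum1 hpiO_sum1).
  rewrite /G /f [in RHS](eq_bigr (fun t : 'I_T.+1 => Pt K t F (s0, o0) - c)); last first.
    by move=> t _; rewrite PtB Pt_cst.
  by rewrite sumrB sumr_const card_ord mulr_natl subrK.
pose M := C * (B + B).
apply/cvgrPdist_le => e e0.
exists (Num.Def.trunc (M / e)).+1 => // T /= hT.
case: T hT => [//|T] hT.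
rewrite hfis -/c.
have Tpos : 0 < T.+1%:R :> R by rewrite ltr0n.
rewrite mulrDr mulKf ?lt0r_neq0 //.
rewrite (_ : c - _ = - (T.+1%:R^-1 * G T.+1 (s0, o0))); last by rewrite opprD addrC subrK.
rewrite normrN normrM ger0_norm ?invr_ge0 //.
rewrite mulrC ler_pdivrMr //.
apply: le_trans (hGb _ _) _.
have h1 := truncnS_gt (M / e).
have h2 : (Num.Def.trunc (M / e)).+1%:R <= T.+1%:R :> R by rewrite ler_nat.
have h3 : M / e < T.+1%:R := lt_le_trans h1 h2.
rewrite ltr_pdivrMr // in h3.
by apply: ltW; rewrite [e * _]mulrC; exact: h3.
Qed.
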